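(* Let $P$ be a flasque pre-meadow with $\mathbf{a}$. For $x\in P$ let $J_x=\{0\cdot z\in 0\cdot P\mid x+0\cdot z\in P_{0\cdot z}^{\times}\}$. Then $J_x$ has a greatest element (with respect to the order on $0\cdot P$) for all $x\in P$ if and only if $J_x$ has a greatest element for all $x\in P_0$.
   Context: A pre-meadow is a structure $(P,+,-,\cdot,0,1)$ satisfying: $(x+y)+z=x+(y+z)$, $x+y=y+x$, $x+0=x$, $x+(-x)=0\cdot x$, $(xy)z=x(yz)$, $xy=yx$, $1\cdot x=x$, $x(y+z)=xy+xz$, $-(-x)=x$, $0\cdot(x+y)=0\cdot x\cdot y$. For $z\in 0\cdot P$ put $P_z:=\{x\in P\mid 0\cdot x=z\}$. $P$ is a pre-meadow with $\mathbf{a}$ if there is a unique $z\in 0\cdot P$ with $|P_z|=1$, denoted $\mathbf{a}$, and $x+\mathbf{a}=\mathbf{a}$ for all $x\in P$. Each $P_{0\cdot z}$ is a commutative ring with the induced operations (zero $0\cdot z$, unit $1+0\cdot z$), and $P_{0\cdot z}^{\times}$ denotes its group of units. The set $0\cdot P$ is ordered by $0\cdot z\le 0\cdot w$ iff $0\cdot z\cdot w=0\cdot z$ (so $0$ is greatest and $\mathbf{a}$ least). For $0\cdot z\le 0\cdot w$ the transition map $f_{0\cdot w,0\cdot z}:P_{0\cdot w}\to P_{0\cdot z}$ is $x\mapsto x+0\cdot z$. $P$ is flasque if all transition maps are surjective. *)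

(* Defs.v *)
Record premeadow := PreMeadow {
  pm_car :> Type;
  pm_add : pm_car -> pm_car -> pm_car;
  pm_opp : pm_car -> pm_car;
  pm_mul : pm_car -> pm_car -> pm_car;
  pm_zero : pm_car;
  pm_one : pm_car;
  pm_addA : forall x y z, pm_add (pm_add x y) z = pm_add x (pm_add y z);
  pm_addC : forall x y, pm_add x y = pm_add y x;
  pm_add0 : forall x, pm_add x pm_zero = x;
  pm_addN : forall x, pm_add x (pm_opp x) = pm_mul pm_zero x;
  pm_mulA : forall x y z, pm_mul (pm_mul x y) z = pm_mul x (pm_mul y z);
  pm_mulC : forall x y, pm_mul x y = pm_mul y x;
  pm_mul1 : forall x, pm_mul pm_one x = x;
  pm_mulD : forall x y z, pm_mul x (pm_add y z) = pm_add (pm_mul x y) (pm_mul x z);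
  pm_oppK : forall x, pm_opp (pm_opp x) = x;
  pm_zeroD : forall x y, pm_mul pm_zero (pm_add x y) = pm_mul (pm_mul pm_zero x) y
}.

Section Defs.
Variable P : premeadow.
Local Notation "x + y" := (pm_add P x y).
Local Notation "x * y" := (pm_mul P x y).
Local Notation "0" := (pm_zero P).
Local Notation "1" := (pm_one P).

Definition in_zeroP (a : P) : Prop := exists w : P, a = 0 * w.

Definition in_Pz (a y : P) : Prop := 0 * y = a.

(* y is a unit of the commutative ring P_a (zero a, unit 1 + a) *)
Definition unit_Pz (a y : P) : Prop :=
  in_Pz a y /\ exists u : P, in_Pz a u /\ y * u = 1 + a.

Definition le0 (z w : P) : Prop := 0 * z * w = 0 * z.

Definition has_a : Prop :=
  exists a : P,
    (in_zeroP a /\ exists y : P, forall y', in_Pz a y' <-> y' = y) /\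
    (forall b : P, in_zeroP b -> (exists y : P, forall y', in_Pz b y' <-> y' = y) -> b = a) /\
    (forall x : P, x + a = a).

(* all transition maps f_{0w,0z} : P_{0w} -> P_{0z}, x |-> x + 0z are surjective *)
Definition flasque : Prop :=
  forall z w : P, le0 z w ->
    forall y : P, in_Pz (0 * z) y ->
      exists x : P, in_Pz (0 * w) x /\ x + 0 * z = y.

Definition inJ (x z : P) : Prop := unit_Pz (0 * z) (x + 0 * z).

Definition J_has_greatest (x : P) : Prop :=
  exists z : P, inJ x z /\ forall w : P, inJ x w -> le0 w z.

End Defs.

(* Main.v *)
Require Import Defs.
From Stdlib Require Import Setoid.

Section S.
Variable P : premeadow.
Local Notation "x + y" := (pm_add P x y).
Local Notation "x * y" := (pm_mul P x y).
Local Notation "0" := (pm_zero P).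
Local Notation "1" := (pm_one P).

Lemma mulA' x y z : x * y * z = x * (y * z). Proof. apply pm_mulA. Qed.
Lemma mulC' x y : x * y = y * x. Proof. apply pm_mulC. Qed.
Lemma mulCA x y z : x * (y * z) = y * (x * z).
Proof. rewrite <- !mulA', (mulC' x y); reflexivity. Qed.
Lemma m01 : 0 * 1 = 0. Proof. rewrite mulC'; apply pm_mul1. Qed.
Lemma m00 : 0 * 0 = 0.
Proof. assert (H := pm_zeroD P 1 0). rewrite pm_add0, m01 in H. symmetry; exact H. Qed.
Lemma m0opp x : 0 * pm_opp P x = 0 * x.
Proof. rewrite <- (pm_addN P (pm_opp P x)), pm_oppK, pm_addC, pm_addN. reflexivity. Qed.
Lemma m0xx x : 0 * (x * x) = 0 * x.
Proof.
  assert (H : 0 * (x + pm_opp P x) = 0 * x).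
  { rewrite pm_addN, <- mulA', m00. reflexivity. }
  rewrite pm_zeroD, mulA', (mulC' x (pm_opp P x)), <- mulA', m0opp, mulA' in H. exact H.
Qed.
Lemma addz x y : 0 * x + 0 * y = 0 * (x * y).
Proof. rewrite <- pm_mulD, pm_zeroD, mulA'. reflexivity. Qed.
Lemma m0z y : 0 * (0 * y) = 0 * y.
Proof. rewrite <- mulA', m00. reflexivity. Qed.
Lemma m0abb a b : 0 * (a * (b * b)) = 0 * (a * b).
Proof. rewrite mulCA, m0xx, mulCA. reflexivity. Qed.
Lemma m0aab a b : 0 * (a * (a * b)) = 0 * (a * b).
Proof. rewrite <- (mulA' a a b), (mulC' (a*a) b), m0abb, (mulC' b a). reflexivity. Qed.
Lemma absorb a g y : 0 * a = 0 * g -> a * (0 * (g * y)) = 0 * (g * y).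
Proof. intro H. rewrite mulCA, <- mulA', H, mulA', m0aab. reflexivity. Qed.
Lemma inPz_c a g y : 0 * a = 0 * g -> 0 * (a + 0 * (g * y)) = 0 * (g * y).
Proof. intro H. rewrite pm_zeroD, mulA', (absorb _ _ _ H), m0z. reflexivity. Qed.
Lemma cc y : 0 * y * (0 * y) = 0 * y.
Proof. rewrite mulA', (mulCA y 0 y), m0z, m0xx. reflexivity. Qed.
Lemma addcc y : 0 * y + 0 * y = 0 * y.
Proof. rewrite addz, m0xx. reflexivity. Qed.
End S.

Theorem theorem3p12 (P : premeadow) :
  has_a P -> flasque P ->
  ((forall x : P, J_has_greatest P x) <->
   (forall x : P, pm_mul P (pm_zero P) x = pm_zero P -> J_has_greatest P x)).
Proof.
  intros _ Hfl. split; [intros H x _; apply H|].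
  intros H x.
  destruct (Hfl x (pm_one P)) with (y := x) as [x' [Hx'0 Hx']].
  { unfold le0. rewrite mulA', (mulC' P x (pm_one P)), pm_mul1. reflexivity. }
  { reflexivity. }
  unfold in_Pz in Hx'0. rewrite m01 in Hx'0.
  destruct (H x' Hx'0) as [g [Hg Hmax]].
  exists (pm_mul P g x).
  destruct Hg as [Hin [u [Hu Hau]]].
  unfold in_Pz in Hin, Hu.
  set (a := pm_add P x' (pm_mul P (pm_zero P) g)) in *.
  set (c := pm_mul P (pm_zero P) (pm_mul P g x)).
  assert (C1 : pm_add P x c = pm_add P a c).
  { transitivity (pm_add P (pm_add P x' (pm_mul P (pm_zero P) x)) c).
    { f_equal; symmetry; exact Hx'. }
    unfold a, c. rewrite !pm_addA, !addz, (mulCA P x g x), m0abb, m0aab. reflexivity. }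
  split.
  - unfold inJ, unit_Pz, in_Pz. fold c. rewrite C1. split.
    + unfold c. apply inPz_c. exact Hin.
    + exists (pm_add P u c). split.
      * unfold c. apply inPz_c. exact Hu.
      * rewrite pm_mulD, (mulC' P (pm_add P a c) u), pm_mulD, (mulC' P (pm_add P a c) c), pm_mulD.
        rewrite (mulC' P u a), Hau.
        unfold c. rewrite (absorb _ _ _ _ Hu), (mulC' P _ a), (absorb _ _ _ _ Hin), cc.
        rewrite !addcc, !pm_addA, addcc, addz, m0aab. reflexivity.
  - intros w [Hw_in Hw_u].
    unfold in_Pz in Hw_in.
    assert (hxw : pm_mul P (pm_zero P) (pm_mul P x w) = pm_mul P (pm_zero P) w).
    { rewrite pm_zeroD, mulA', (mulCA P x (pm_zero P) w), m0z in Hw_in. exact Hw_in. }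
    assert (E : pm_add P x' (pm_mul P (pm_zero P) w) = pm_add P x (pm_mul P (pm_zero P) w)).
    { rewrite <- Hx', pm_addA, addz, hxw. reflexivity. }
    assert (Hle : le0 P w g).
    { apply Hmax. unfold inJ. rewrite E. split; assumption. }
    unfold le0 in *. rewrite <- mulA', Hle, mulA', (mulC' P w x), hxw. reflexivity.
Qed.
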